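(* Let $f$ satisfy the Standing Assumption below and let $E_*\in J$ with $E_*=f_-(\theta_-)=f_+(\theta_+)$, $\theta_\pm\in I_\pm$. If $\|T_f(E_* )\|_{\mathbb{T}}\ge 7\nu/d$, then $|\partial_\theta f_\pm(\theta_\pm)|\ge\nu$ for both signs.
   Context: Standing Assumption: $I_-,I_+\subset\mathbb{T}$ are closed intervals with disjoint interiors, $I=I_-\cup I_+$, $J\subset\mathbb{R}$ is a closed interval, and $f:I\to J$ is $C^2$ with $f_\pm:=f|_{I_\pm}$ satisfying $\pm\partial_\theta f_\pm\ge 0$. Moreover: (1) $d\le|\partial_\theta f|+|\partial_\theta^2 f|\le D$ on $I$ for constants $0<d\le D$; (2) $f_\pm(I_\pm)=J$; (3) there is a constant $0<\nu<d/2$ with $|\partial_\theta f|\ge\nu$ at the boundary points of $I$. By (2) and monotonicity, the inverses $f_\pm^{-1}:J\to I_\pm$ are defined, and $T_f:J\to I_+-I_-$ is $T_f(E)=f_+^{-1}(E)-f_-^{-1}(E)$. $\|x\|_{\mathbb{T}}$ denotes distance to the nearest integer. *)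

(* Defs.v *)
From Stdlib Require Import Reals Lra ZArith.
From Coquelicot Require Import Coquelicot.
Open Scope R_scope.

Definition normT (x : R) : R := Rmin (frac_part x) (1 - frac_part x).

(* Membership of a real x (a lift of a point of T = R/Z) in the projection
   to T of the real interval [a, b]. *)
Definition inArc (a b x : R) : Prop := exists k : Z, a <= x + IZR k <= b.

Definition inArcInt (a b x : R) : Prop := exists k : Z, a < x + IZR k < b.

(* I = I_- u I_+ ⊂ T, with I_- = proj [am,bm], I_+ = proj [ap,bp]. *)
Definition inI (am bm ap bp x : R) : Prop := inArc am bm x \/ inArc ap bp x.

(* x is a boundary point of I (topological boundary in T, I being closed). *)
Definition bdI (am bm ap bp x : R) : Prop :=
  inI am bm ap bp x /\
  forall eps : R, 0 < eps -> exists y : R, Rabs (y - x) < eps /\ ~ inI am bm ap bp y.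

(* Main.v *)
Require Import Defs.
From Stdlib Require Import Reals Lra Lia ZArith Classical.
From Coquelicot Require Import Coquelicot.
Open Scope R_scope.

Lemma cont_eps (h : R -> R) (x : R) : continuous h x ->
  forall eps, 0 < eps -> exists del, 0 < del /\ forall y, Rabs (y - x) < del -> Rabs (h y - h x) < eps.
Proof.
  intros Hc eps He.
  destruct (proj1 (filterlim_locally h (h x)) Hc (mkposreal eps He)) as [del Hd].
  exists (pos del). split. apply cond_pos.
  intros y Hy. apply (Hd y). exact Hy.
Qed.

Lemma mono_ge (g h : R -> R) (a b m : R) : a <= b ->
  (forall x, is_derive g x (h x)) -> (forall x, a <= x <= b -> m <= h x) ->
  m * (b - a) <= g b - g a.
Proof.
  intros Hab Hd Hm.
  destruct (MVT_gen g a b h) as [c [Hc Heq]].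
  - intros x _. apply Hd.
  - intros x _. apply continuity_pt_filterlim. apply (@ex_derive_continuous R_AbsRing R_NormedModule). eexists; apply Hd.
  - rewrite Rmin_left in Hc by lra. rewrite Rmax_right in Hc by lra.
    rewrite Heq. apply Rmult_le_compat_r. lra. apply Hm. lra.
Qed.

Lemma cont_of_der (g : R -> R) x l : is_derive g x l -> continuous g x.
Proof. intros H. apply (@ex_derive_continuous R_AbsRing R_NormedModule). exists l; exact H. Qed.

Lemma rise (g h : R -> R) (nu m a b : R) :
  a <= b -> 0 < m -> 0 < nu ->
  (forall x, is_derive g x (h x)) -> (forall x, continuous h x) ->
  (forall x, a <= x <= b -> -nu < g x < nu -> m < Rabs (h x)) ->
  0 < h a -> -nu < g a < nu ->
  exists p, a <= p <= b /\ (forall x, a <= x <= p -> g a + m * (x - a) <= g x)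
     /\ (p = b \/ g p = nu) /\ (forall x, a <= x <= p -> g x < nu -> m < h x).
Proof.
  intros Hab Hm Hnu Hd Hc Hh Ha0 Hga.
  assert (Ha : m < h a).
  { specialize (Hh a ltac:(lra) Hga). rewrite Rabs_pos_eq in Hh by lra. exact Hh. }
  set (E := fun x => a <= x <= b /\ forall y, a <= y <= x -> m < h y /\ g y < nu).
  assert (HEb : bound E). { exists b. intros x [Hx _]. lra. }
  assert (HEa : exists x, E x). { exists a. split. lra. intros y Hy. replace y with a by lra. lra. }
  destruct (completeness E HEb HEa) as [q [Hq1 Hq2]].
  assert (Haq : a <= q). { apply Hq1. destruct HEa as [x Hx]. unfold E. split. lra.
    intros y Hy. replace y with a by lra. lra. }
  assert (Hqb : q <= b). { apply Hq2. intros x [Hx _]. lra. }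
  assert (G1 : forall y, a <= y < q -> m < h y /\ g y < nu).
  { intros y Hy. destruct (classic (exists x, E x /\ y < x)) as [[x [[Hx1 Hx2] Hx3]]|Hn].
    - apply Hx2. lra.
    - exfalso. assert (q <= y). { apply Hq2. intros x Hx. destruct (Rle_dec x y). lra.
        exfalso. apply Hn. exists x. split. exact Hx. lra. } lra. }
  assert (Hhq : m <= h q).
  { destruct (Req_dec q a) as [->|Hqa]. lra.
    destruct (Rle_dec m (h q)) as [|Hlt]. lra. exfalso.
    destruct (cont_eps h q (Hc q) (m - h q) ltac:(lra)) as [del [Hdel Hdy]].
    set (y := Rmax a (q - del/2)).
    assert (a <= y < q). { unfold y. split. apply Rmax_l. apply Rmax_lub_lt; lra. }
    assert (Rabs (y - q) < del). { unfold y. apply Rabs_def1; unfold Rmax; destruct Rle_dec; lra. }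
    specialize (Hdy y H0). specialize (G1 y H). apply Rabs_def2 in Hdy. lra. }
  assert (Hge : forall x, a <= x <= q -> m <= h x).
  { intros x Hx. destruct (Req_dec x q) as [->|]. exact Hhq. left. apply G1. lra. }
  assert (Hlow : forall x, a <= x <= q -> g a + m * (x - a) <= g x).
  { intros x Hx. pose proof (mono_ge g h a x m ltac:(lra) Hd ltac:(intros; apply Hge; lra)). lra. }
  assert (Hgq : g q <= nu).
  { destruct (Req_dec q a) as [->|Hqa]. lra.
    destruct (Rle_dec (g q) nu) as [|Hlt]. lra. exfalso.
    destruct (cont_eps g q (cont_of_der g q _ (Hd q)) (g q - nu) ltac:(lra)) as [del [Hdel Hdy]].
    set (y := Rmax a (q - del/2)).
    assert (a <= y < q). { unfold y. split. apply Rmax_l. apply Rmax_lub_lt; lra. }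
    assert (Rabs (y - q) < del). { unfold y. apply Rabs_def1; unfold Rmax; destruct Rle_dec; lra. }
    specialize (Hdy y H0). specialize (G1 y H). apply Rabs_def2 in Hdy. lra. }
  assert (Hgq2 : -nu < g q). { pose proof (Hlow q ltac:(lra)). nra. }
  destruct (Req_dec (g q) nu) as [Heq|Hne].
  - exists q. split. lra. split. exact Hlow. split. right; exact Heq.
    intros x Hx Hgx. destruct (Req_dec x q) as [->|]. lra. apply G1. lra.
  - assert (Hhq2 : m < h q).
    { specialize (Hh q ltac:(lra) ltac:(lra)). rewrite Rabs_pos_eq in Hh by lra. exact Hh. }
    assert (Hqb2 : q = b).
    { destruct (Req_dec q b) as [|Hqb2]. exact H. exfalso.
      destruct (cont_eps h q (Hc q) (h q - m) ltac:(lra)) as [d1 [Hd1 Hdy1]].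
      destruct (cont_eps g q (cont_of_der g q _ (Hd q)) (nu - g q) ltac:(lra)) as [d2 [Hd2 Hdy2]].
      set (q' := Rmin b (q + Rmin d1 d2 / 2)).
      assert (Hq'1 : q < q'). { unfold q'. apply Rmin_glb_lt. lra.
        assert (0 < Rmin d1 d2) by (apply Rmin_glb_lt; lra). lra. }
      assert (Hq'2 : q' - q < Rmin d1 d2). { unfold q'.
        assert (0 < Rmin d1 d2) by (apply Rmin_glb_lt; lra).
        pose proof (Rmin_r b (q + Rmin d1 d2 / 2)). lra. }
      assert (E q'). { split. split. lra. unfold q'; apply Rmin_l.
        intros y Hy. destruct (Rlt_le_dec y q). apply G1. lra.
        assert (Rabs (y - q) < d1). { rewrite Rabs_pos_eq by lra. pose proof (Rmin_l d1 d2). lra. }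
        assert (Rabs (y - q) < d2). { rewrite Rabs_pos_eq by lra. pose proof (Rmin_r d1 d2). lra. }
        specialize (Hdy1 y H). specialize (Hdy2 y H0). apply Rabs_def2 in Hdy1. apply Rabs_def2 in Hdy2. lra. }
      specialize (Hq1 q' H). lra. }
    exists q. split. lra. split. exact Hlow. split. left; exact Hqb2.
    intros x Hx Hgx. destruct (Req_dec x q) as [->|]. lra. apply G1. lra.
Qed.

Lemma mono_le (g h : R -> R) (a b M : R) : a <= b ->
  (forall x, is_derive g x (h x)) -> (forall x, a <= x <= b -> h x <= M) ->
  g b - g a <= M * (b - a).
Proof.
  intros Hab Hd Hm.
  destruct (MVT_gen g a b h) as [c [Hc Heq]].
  - intros x _. apply Hd.
  - intros x _. apply continuity_pt_filterlim. apply (cont_of_der g x _ (Hd x)).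
  - rewrite Rmin_left in Hc by lra. rewrite Rmax_right in Hc by lra.
    rewrite Heq. apply Rmult_le_compat_r. lra. apply Hm. lra.
Qed.

Lemma pos_interior (F1 F2 : R -> R) c e d z :
  (forall x, is_derive F1 x (F2 x)) -> (forall x, continuous F2 x) -> 0 < d ->
  (forall x, c <= x <= e -> 0 <= F1 x) ->
  (forall x, c <= x <= e -> d <= Rabs (F1 x) + Rabs (F2 x)) ->
  c < z < e -> 0 < F1 z.
Proof.
  intros Hd Hc Hd0 Hpos Hdd Hz.
  destruct (Rle_lt_or_eq_dec 0 (F1 z) (Hpos z ltac:(lra))) as [|H0]. exact r. exfalso.
  specialize (Hdd z ltac:(lra)). rewrite <- H0, Rabs_R0 in Hdd.
  destruct (Rle_lt_dec 0 (F2 z)) as [Hs|Hs].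
  - rewrite Rabs_pos_eq in Hdd by lra.
    destruct (cont_eps F2 z (Hc z) (F2 z / 2) ltac:(lra)) as [del [Hdel Hdy]].
    set (w := Rmax c (z - del/2)).
    assert (c <= w < z). { unfold w. split. apply Rmax_l. apply Rmax_lub_lt; lra. }
    assert (Hb : forall x, w <= x <= z -> F2 z / 2 <= F2 x).
    { intros x Hx. assert (Rabs (x - z) < del). { apply Rabs_def1; unfold w, Rmax in Hx; destruct Rle_dec in Hx; lra. }
      specialize (Hdy x H1). apply Rabs_def2 in Hdy. lra. }
    pose proof (mono_ge F1 F2 w z (F2 z/2) ltac:(lra) Hd Hb).
    pose proof (Hpos w ltac:(lra)). nra.
  - rewrite Rabs_left in Hdd by lra.
    destruct (cont_eps F2 z (Hc z) (- F2 z / 2) ltac:(lra)) as [del [Hdel Hdy]].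
    set (w := Rmin e (z + del/2)).
    assert (z < w <= e). { unfold w. split. apply Rmin_glb_lt; lra. apply Rmin_l. }
    assert (Hb : forall x, z <= x <= w -> F2 x <= F2 z / 2).
    { intros x Hx. assert (Rabs (x - z) < del). { apply Rabs_def1; unfold w, Rmin in Hx; destruct Rle_dec in Hx; lra. }
      specialize (Hdy x H1). apply Rabs_def2 in Hdy. lra. }
    pose proof (mono_le F1 F2 z w (F2 z/2) ltac:(lra) Hd Hb).
    pose proof (Hpos w ltac:(lra)). nra.
Qed.

Lemma arc_inj_lt (F F1 F2 : R -> R) a b d x1 x2 :
  (forall x, is_derive F x (F1 x)) ->
  (forall x, is_derive F1 x (F2 x)) -> (forall x, continuous F2 x) -> 0 < d ->
  (forall x, a <= x <= b -> 0 <= F1 x) ->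
  (forall x, a <= x <= b -> d <= Rabs (F1 x) + Rabs (F2 x)) ->
  a <= x1 -> x1 < x2 -> x2 <= b -> F x1 = F x2 -> False.
Proof.
  intros HF HF1 Hc Hd0 Hpos Hdd H1 H12 H2 Heq.
  set (z := (x1 + x2) / 2).
  assert (Hz : 0 < F1 z) by (apply (pos_interior F1 F2 a b d z HF1 Hc Hd0 Hpos Hdd); unfold z; lra).
  destruct (cont_eps F1 z (cont_of_der F1 z _ (HF1 z)) (F1 z / 2) ltac:(lra)) as [del [Hdel Hdy]].
  set (w := Rmin x2 (z + del/2)).
  assert (z < w <= x2). { unfold w, z. split. apply Rmin_glb_lt; lra. apply Rmin_l. }
  assert (Hb : forall x, z <= x <= w -> F1 z / 2 <= F1 x).
  { intros x Hx. assert (Rabs (x - z) < del). { apply Rabs_def1; unfold w, Rmin in Hx; destruct Rle_dec in Hx; lra. }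
    specialize (Hdy x H0). apply Rabs_def2 in Hdy. lra. }
  pose proof (mono_ge F F1 z w (F1 z/2) ltac:(lra) HF Hb).
  pose proof (mono_ge F F1 x1 z 0 ltac:(unfold z; lra) HF ltac:(intros; apply Hpos; unfold z in *; lra)).
  pose proof (mono_ge F F1 w x2 0 ltac:(lra) HF ltac:(intros; apply Hpos; unfold z in *; lra)).
  nra.
Qed.

Lemma arc_inj (F F1 F2 : R -> R) a b d x1 x2 :
  (forall x, is_derive F x (F1 x)) ->
  (forall x, is_derive F1 x (F2 x)) -> (forall x, continuous F2 x) -> 0 < d ->
  (forall x, a <= x <= b -> 0 <= F1 x) ->
  (forall x, a <= x <= b -> d <= Rabs (F1 x) + Rabs (F2 x)) ->
  a <= x1 <= b -> a <= x2 <= b -> F x1 = F x2 -> x1 = x2.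
Proof.
  intros. destruct (Rtotal_order x1 x2) as [|[|]]; auto; exfalso.
  eapply (arc_inj_lt F F1 F2 a b d x1 x2); eauto; lra.
  eapply (arc_inj_lt F F1 F2 a b d x2 x1); eauto; lra.
Qed.


Lemma IZR_le_pred (k k0 : Z) : (k < k0)%Z -> IZR k <= IZR k0 - 1.
Proof. intros H. assert (k <= k0 - 1)%Z by lia. apply IZR_le in H0. rewrite minus_IZR in H0. exact H0. Qed.

Lemma inArc_full a b x : 1 <= b - a -> inArc a b x.
Proof.
  intros H. destruct (archimed (x - a)) as [H1 H2].
  exists (1 - up (x - a))%Z. rewrite minus_IZR. lra.
Qed.

Lemma inArc_closed_right a b c del : a <= b -> 0 < del ->
  (forall y, c < y < c + del -> inArc a b y) -> inArc a b c.
Proof.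
  intros Hab Hdel H.
  destruct (Rle_dec 1 (b - a)). apply inArc_full; lra.
  destruct (archimed (c - a)) as [H1 H2].
  set (k0 := (1 - up (c - a))%Z).
  assert (Hk0 : IZR k0 = 1 - IZR (up (c - a))) by (unfold k0; rewrite minus_IZR; reflexivity).
  destruct (Rle_dec (c + IZR k0) b). exists k0. lra.
  exfalso.
  set (y := c + Rmin del (a + 1 - (c + IZR k0)) / 2).
  assert (0 < Rmin del (a + 1 - (c + IZR k0))) by (apply Rmin_glb_lt; lra).
  pose proof (Rmin_l del (a + 1 - (c + IZR k0))).
  pose proof (Rmin_r del (a + 1 - (c + IZR k0))).
  destruct (H y ltac:(unfold y; lra)) as [k Hk].
  destruct (Z.lt_total k k0) as [Hl|[He|Hg]].
  - apply IZR_le_pred in Hl. unfold y in *. lra.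
  - subst k. unfold y in *. lra.
  - apply IZR_le_pred in Hg. unfold y in *. lra.
Qed.

Lemma notA_right a b y : b - a < 1 -> b < y < a + 1 -> ~ inArc a b y.
Proof.
  intros H1 H2 [k Hk].
  destruct (Z.lt_total k 0) as [Hl|[He|Hg]].
  - apply IZR_le_pred in Hl. lra.
  - subst k. simpl in Hk. lra.
  - apply IZR_le_pred in Hg. lra.
Qed.

Lemma inArc_neg a b x : inArc a b x -> inArc (-b) (-a) (-x).
Proof. intros [k Hk]. exists (- k)%Z. rewrite opp_IZR. lra. Qed.

Lemma inArc_neg' a b x : inArc (-b) (-a) (-x) -> inArc a b x.
Proof. intros [k Hk]. exists (- k)%Z. rewrite opp_IZR. lra. Qed.

Lemma inArc_base a b x : a <= x <= b -> inArc a b x.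
Proof. intros H. exists 0%Z. simpl. lra. Qed.

Lemma inArc_shift a b x k : inArc a b (x + IZR k) -> inArc a b x.
Proof. intros [j Hj]. exists (j + k)%Z. rewrite plus_IZR. lra. Qed.

Lemma per_nat (F : R -> R) : (forall x, F (x + 1) = F x) -> forall n x, F (x + INR n) = F x.
Proof.
  intros Hp n. induction n; intros x. simpl. f_equal. lra.
  rewrite S_INR. replace (x + (INR n + 1)) with ((x + INR n) + 1) by lra. rewrite Hp. apply IHn.
Qed.

Lemma per_Z (F : R -> R) : (forall x, F (x + 1) = F x) -> forall x k, F (x + IZR k) = F x.
Proof.
  intros Hp x k. destruct (Z_le_gt_dec 0 k).
  - rewrite <- (Z2Nat.id k) by lia. rewrite <- INR_IZR_INZ. apply per_nat. exact Hp.
  - replace k with (- Z.of_nat (Z.to_nat (- k)))%Z by lia.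
    rewrite opp_IZR, <- INR_IZR_INZ.
    rewrite <- (per_nat F Hp (Z.to_nat (- k)) (x + - INR (Z.to_nat (- k)))). f_equal. lra.
Qed.

Lemma per_der (F F1 : R -> R) : (forall x, F (x + 1) = F x) -> (forall x, is_derive F x (F1 x)) ->
  forall x k, F1 (x + IZR k) = F1 x.
Proof.
  intros Hp Hd x k.
  assert (Hg : is_derive (fun y : R => y + IZR k) x 1). { auto_derive; auto; ring. }
  assert (H : is_derive (fun y => F (y + IZR k)) x (F1 (x + IZR k))).
  { pose proof (is_derive_comp F (fun y => y + IZR k) x _ _ (Hd (x + IZR k)) Hg) as H.
    simpl in H. unfold scal in H; simpl in H; unfold mult in H; simpl in H.
    rewrite Rmult_1_l in H. exact H. }
  apply (is_derive_ext _ F) in H. 2:{ intros t. apply per_Z. exact Hp. }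
  apply is_derive_unique in H. rewrite <- H. apply is_derive_unique. apply Hd.
Qed.

Lemma frac_shift x k : frac_part (x + IZR k) = frac_part x.
Proof.
  destruct (Int_part_frac_part_spec (x + IZR k) (Int_part x + k) (frac_part x)) as [_ H].
  - pose proof (base_fp x). lra.
  - rewrite plus_IZR. pose proof (Rplus_Int_part_frac_part x). lra.
  - symmetry. exact H.
Qed.

Lemma normT_shift x k : normT (x + IZR k) = normT x.
Proof. unfold normT. rewrite frac_shift. reflexivity. Qed.

Lemma normT_le_abs x : normT x <= Rabs x.
Proof.
  unfold normT. pose proof (base_Int_part x) as [H1 H2].
  unfold frac_part.
  destruct (Rle_dec 0 x).
  - rewrite Rabs_pos_eq by lra.
    assert (-1 < Int_part x)%Z. { apply lt_IZR. simpl. lra. }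
    assert (0 <= IZR (Int_part x)). { apply IZR_le. lia. }
    eapply Rle_trans. apply Rmin_l. lra.
  - rewrite Rabs_left by lra.
    assert (Int_part x < 0)%Z. { apply lt_IZR. simpl. lra. }
    assert (IZR (Int_part x) <= -1). { apply IZR_le. lia. }
    eapply Rle_trans. apply Rmin_r. lra.
Qed.


Lemma der_opp (g h : R -> R) : (forall x, is_derive g x (h x)) -> forall x, is_derive (fun y => - g y) x (- h x).
Proof. intros H x. apply (is_derive_opp g x (h x)). apply H. Qed.

Lemma der_neg (g h : R -> R) : (forall x, is_derive g x (h x)) -> forall x, is_derive (fun y => g (- y)) x (- h (- x)).
Proof.
  intros H x.
  assert (Hg : is_derive (fun y : R => - y) x (-1)). { auto_derive; auto. }
  pose proof (is_derive_comp g (fun y => - y) x _ _ (H (- x)) Hg) as H2.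
  unfold scal in H2; simpl in H2; unfold mult in H2; simpl in H2.
  replace (- h (- x)) with (-1 * h (- x)) by ring. exact H2.
Qed.

Lemma der_negneg (g h : R -> R) : (forall x, is_derive g x (h x)) -> forall x, is_derive (fun y => - g (- y)) x (h (- x)).
Proof.
  intros H x. pose proof (der_opp _ _ (der_neg g h H) x) as H2. simpl in H2.
  replace (h (- x)) with (- - h (- x)) by ring. exact H2.
Qed.

Lemma cont_neg (h : R -> R) : (forall x, continuous h x) -> forall x, continuous (fun y => h (- y)) x.
Proof.
  intros H x. apply (continuous_comp (fun y : R => - y) h).
  - apply (cont_of_der (fun y => - y) x (-1)). auto_derive; auto.
  - apply H.
Qed.

Lemma cont_opp (h : R -> R) : (forall x, continuous h x) -> forall x, continuous (fun y => - h y) x.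
Proof. intros H x. apply (continuous_opp h x). apply H. Qed.

Lemma der_quad (F F1 : R -> R) a0 m s : (forall x, is_derive F x (F1 x)) ->
  forall x, is_derive (fun y => F y + a0 * y - m * (y - s) ^ 2 / 2) x (F1 x + a0 - m * (x - s)).
Proof.
  intros H x. auto_derive. exists (F1 x); apply H.
  replace (Derive (fun x0 : R => F x0) x) with (F1 x). field.
  symmetry. apply is_derive_unique. apply H.
Qed.


Lemma core (am bm ap bp d nu : R) (F F1 F2 : R -> R) (U : R -> Prop) :
  am <= bm -> bm - am <= 1 -> ap <= bp ->
  (forall x k, F (x + IZR k) = F x) ->
  (forall x, is_derive F x (F1 x)) -> (forall x, is_derive F1 x (F2 x)) -> (forall x, continuous F2 x) ->
  (forall x, inArc am bm x -> F1 x <= 0) -> (forall x, inArc ap bp x -> 0 <= F1 x) ->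
  (forall x, inArc am bm x -> U x) -> (forall x, inArc ap bp x -> U x) ->
  (forall x, U x -> inArc am bm x \/ inArc ap bp x) ->
  (forall x, U x -> d <= Rabs (F1 x) + Rabs (F2 x)) ->
  (forall x, U x -> Rabs (F1 x) < nu -> exists eps, 0 < eps /\ forall y, Rabs (y - x) < eps -> U y) ->
  0 < d -> 0 < nu -> nu < d / 2 ->
  forall s, am <= s <= bm -> Rabs (F1 s) < nu -> 0 < F2 s -> F s <= F bp ->
  exists q k, Rabs (q - s) < 7 * nu / d /\ F q = F s /\ ap <= q + IZR k <= bp.
Proof.
  intros Hm Hm1 Hp HFper HF1 HF2 HF2c HmA HmB HUA HUB HUAB HU1 HU2 Hd Hnu Hnud s Hs Hs1 Hs2 Htop.
  set (m := d - nu).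
  assert (Hm0 : nu < m) by (unfold m; lra).
  set (t1 := nu / m).
  assert (Ht1 : m * t1 = nu) by (unfold t1; field; lra).
  assert (Ht1p : 0 < t1) by (unfold t1; apply Rdiv_lt_0_compat; lra).
  assert (Hbud : 7 / 2 * t1 < 7 * nu / d).
  { apply (Rmult_lt_reg_r d). lra. unfold Rdiv. rewrite (Rmult_assoc (7 * nu)), Rinv_l by lra.
    unfold m in Ht1. nra. }
  assert (Hdm : forall x, U x -> -nu < F1 x < nu -> m < Rabs (F2 x)).
  { intros x Ux Hx. specialize (HU1 x Ux). assert (Rabs (F1 x) < nu) by (apply Rabs_def1; lra).
    unfold m. lra. }
  assert (HsA : inArc am bm s) by (apply inArc_base; lra).
  assert (Hs0 : F1 s <= 0) by (apply HmA; exact HsA).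
  set (a0 := - F1 s).
  assert (Ha0 : 0 <= a0 < nu). { unfold a0. rewrite Rabs_left1 in Hs1 by lra. lra. }
  assert (Hs1' : -nu < F1 s < nu) by (unfold a0 in Ha0; lra).
  destruct (Req_dec (bm - am) 1) as [Hfull|Hnf].
  { exfalso.
    assert (HA : forall x, inArc am bm x) by (intros; apply inArc_full; lra).
    destruct (rise F1 F2 nu m s (s + 2 * t1) ltac:(lra) ltac:(lra) Hnu HF2 HF2c
      ltac:(intros x _ Hx; apply Hdm; auto) Hs2 Hs1') as [p [Hp1 [Hp2 [Hp3 Hp4]]]].
    pose proof (HmA p (HA p)). destruct Hp3 as [->|Hp3].
    - specialize (Hp2 (s + 2 * t1) ltac:(lra)). lra.
    - lra. }
  assert (Hlt1 : bm - am < 1) by lra.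
  destruct (rise F1 F2 nu m s bm ltac:(lra) ltac:(lra) Hnu HF2 HF2c
      ltac:(intros x Hx Hx2; apply Hdm; auto; apply HUA; apply inArc_base; lra) Hs2 Hs1')
    as [p [Hp1 [Hp2 [Hp3 Hp4]]]].
  assert (Hpb : p = bm). { destruct Hp3 as [|Hp3]. exact H. pose proof (HmA p ltac:(apply inArc_base; lra)). lra. }
  subst p. set (c := bm) in *.
  assert (Hc0 : F1 c <= 0) by (apply HmA; apply inArc_base; lra).
  assert (Hcs : m * (c - s) <= a0) by (specialize (Hp2 c ltac:(lra)); unfold a0; lra).
  assert (HF2c0 : m < F2 c) by (apply Hp4; lra).
  assert (Hdrop : 2 * m * (F s - F c) <= a0 ^ 2).
  { pose proof (mono_ge _ _ s c 0 ltac:(lra) (der_quad F F1 a0 m s HF1)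
      ltac:(intros x Hx; specialize (Hp2 x Hx); unfold a0 in *; lra)) as H.
    assert (F s - F c <= a0 * (c - s) - m * (c - s) ^ 2 / 2) by lra.
    assert (0 <= (a0 - m * (c - s)) ^ 2) by (apply pow2_ge_0). nra. }
  assert (HFcs : F c <= F s).
  { pose proof (mono_le F F1 s c 0 ltac:(lra) HF1 ltac:(intros x Hx; apply HmA; apply inArc_base; lra)). lra. }
  assert (HFc1 : - F1 c < nu) by (specialize (Hp2 c ltac:(lra)); unfold a0 in *; nra).
  assert (HUc : U c) by (apply HUA; apply inArc_base; lra).
  destruct (HU2 c HUc ltac:(rewrite Rabs_left1 by lra; lra)) as [eps [Heps Hball]].
  set (d1 := Rmin eps (am + 1 - c)).
  assert (Hd1 : 0 < d1) by (apply Rmin_glb_lt; lra).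
  assert (Hd1a := Rmin_l eps (am + 1 - c)). assert (Hd1b := Rmin_r eps (am + 1 - c)). fold d1 in Hd1a, Hd1b.
  assert (HB : forall y, c < y < c + d1 -> inArc ap bp y).
  { intros y Hy. destruct (HUAB y (Hball y ltac:(apply Rabs_def1; lra))) as [HA|HB']. 2: exact HB'.
    exfalso. apply (notA_right am bm y Hlt1). unfold c in *; lra. exact HA. }
  assert (Hc00 : F1 c = 0).
  { destruct (Req_dec (F1 c) 0) as [|Hne]. exact H. exfalso.
    destruct (cont_eps F1 c (cont_of_der F1 c _ (HF2 c)) (- F1 c) ltac:(lra)) as [del [Hdel Hdy]].
    set (y := c + Rmin d1 del / 2).
    assert (0 < Rmin d1 del) by (apply Rmin_glb_lt; lra).
    pose proof (Rmin_l d1 del). pose proof (Rmin_r d1 del).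
    pose proof (HmB y (HB y ltac:(unfold y; lra))).
    specialize (Hdy y ltac:(unfold y; apply Rabs_def1; lra)). apply Rabs_def2 in Hdy. lra. }
  destruct (inArc_closed_right ap bp c d1 Hp Hd1 HB) as [k Hk].
  assert (Hck : c + IZR k = ap).
  { destruct (Req_dec (c + IZR k) ap) as [|Hne]. exact H. exfalso.
    destruct (cont_eps F2 c (HF2c c) (F2 c / 2) ltac:(lra)) as [del [Hdel Hdy]].
    set (u := Rmin del (c + IZR k - ap) / 2).
    assert (0 < Rmin del (c + IZR k - ap)) by (apply Rmin_glb_lt; lra).
    pose proof (Rmin_l del (c + IZR k - ap)). pose proof (Rmin_r del (c + IZR k - ap)).
    pose proof (mono_ge F1 F2 (c - u) c (F2 c / 2) ltac:(unfold u; lra) HF2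
      ltac:(intros x Hx; specialize (Hdy x ltac:(apply Rabs_def1; unfold u in *; lra)); apply Rabs_def2 in Hdy; lra)).
    assert (inArc ap bp (c - u)) by (exists k; unfold u in *; lra).
    pose proof (HmB _ H3). assert (0 < u) by (unfold u; lra). nra. }
  set (e := bp - IZR k).
  assert (Harc : forall x, c <= x <= e -> inArc ap bp x) by (intros x Hx; exists k; unfold e in *; lra).
  assert (Fe : F e = F bp).
  { unfold e. replace (bp - IZR k) with (bp + IZR (- k)) by (rewrite opp_IZR; ring). apply HFper. }
  assert (Hce : c <= e) by (unfold e; lra).
  assert (Hcs2 : c - s < t1).
  { apply (Rmult_lt_reg_l m). lra. rewrite Ht1. lra. }
  assert (Hcs3 : s <= c) by lra.
  cut (exists q, c <= q <= e /\ q - s < 7 * nu / d /\ F s <= F q).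
  { intros [q [Hq1 [Hq2 Hq3]]].
    assert (Hcont : continuity F) by (intros x; apply continuity_pt_filterlim; apply (cont_of_der F x _ (HF1 x))).
    destruct (IVT_gen F c q (F s) Hcont) as [q' [Hq'1 Hq'2]].
    { rewrite Rmin_left by lra. rewrite Rmax_right by lra. lra. }
    rewrite Rmin_left in Hq'1 by lra. rewrite Rmax_right in Hq'1 by lra.
    exists q', k. split. rewrite Rabs_pos_eq by lra. lra. split. exact Hq'2. unfold e in *. lra. }
  destruct (Rle_dec e (c + (5 / 2 * t1))) as [HeK|HeK].
  { exists e. split. lra. split. idtac. lra. rewrite Fe. exact Htop. }
  apply Rnot_le_lt in HeK. 
  assert (HarcU : forall x, c <= x <= e -> U x) by (intros; apply HUB; apply Harc; auto).
  assert (HarcP : forall x, c <= x <= e -> 0 <= F1 x) by (intros; apply HmB; apply Harc; auto).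
  assert (HarcD : forall x, c <= x <= e -> d <= Rabs (F1 x) + Rabs (F2 x)) by (intros; apply HU1; apply HarcU; auto).
  assert (Fpos : forall z, c < z < e -> 0 < F1 z)
    by (intros z Hz; apply (pos_interior F1 F2 c e d z HF2 HF2c Hd HarcP HarcD Hz)).
  destruct (rise F1 F2 nu m c (c + (5 / 2 * t1)) ltac:( lra) ltac:(lra) Hnu HF2 HF2c
      ltac:(intros x Hx Hx2; apply Hdm; auto; apply HarcU;  lra) ltac:(lra) ltac:(lra))
    as [p [Hr1 [Hr2 [Hr3 Hr4]]]].
  assert (Hgain : m * (p - c) ^ 2 <= 2 * (F p - F c)).
  { pose proof (mono_ge _ _ c p 0 ltac:(lra) (der_quad F F1 0 m c HF1)
      ltac:(intros x Hx; specialize (Hr2 x Hx); lra)) as H. lra. }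
  destruct Hr3 as [Hr3|Hr3].
  { exists p. split. lra. split.  lra.
    assert (m * (c + (5 / 2 * t1) - c) ^ 2 <= 2 * (F p - F c)) by (rewrite <- Hr3; exact Hgain).
    replace (c + (5 / 2 * t1) - c) with (5 / 2 * t1) in H by ring. 
    assert (a0 ^ 2 < nu ^ 2) by nra.
    assert (m * (5 / 2 * t1) ^ 2 * m = 25 / 4 * nu ^ 2) by (rewrite <- Ht1; unfold t1; field; lra).
    nra. }
  assert (Hpc : p - c <= t1).
  { specialize (Hr2 p ltac:(lra)). apply (Rmult_le_reg_l m). lra. rewrite Ht1. lra. }
  assert (Hpc2 : c < p) by (destruct (Req_dec p c) as [E|E]; [rewrite E in Hr3; lra | lra]).
  assert (Hclaim : forall y, p <= y <= p + t1 / 2 -> nu <= F1 y).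
  { intros y Hy. destruct (Rle_dec nu (F1 y)) as [|Hlt]. exact r. exfalso.
    assert (Hyp : p < y) by (destruct (Req_dec y p) as [E|E]; [rewrite E in Hlt; lra|lra]).
    assert (HyU : c <= y <= e) by ( lra).
    assert (Hy0 : 0 < F1 y) by (apply Fpos; lra).
    assert (HF2y : m < Rabs (F2 y)) by (apply Hdm; [apply HarcU; lra|lra]).
    destruct (Rle_dec 0 (F2 y)) as [Hpos|Hneg].
    - rewrite Rabs_pos_eq in HF2y by lra.
      destruct (rise (fun u => - F1 (- u)) (fun u => F2 (- u)) nu m (- y) (- p) ltac:(lra) ltac:(lra) Hnu
        (der_negneg F1 F2 HF2) (cont_neg F2 HF2c)
        ltac:(intros u Hu Hu2; cbv beta in *; apply Hdm; [apply HarcU; lra|lra])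
        ltac:(cbv beta; rewrite Ropp_involutive; lra) ltac:(cbv beta; rewrite Ropp_involutive; lra))
        as [p2 [Hq1 [Hq2 [Hq3 _]]]].
      rewrite Ropp_involutive in Hq2.
      destruct Hq3 as [->|Hq3].
      + specialize (Hq2 (- p) ltac:(lra)). rewrite Ropp_involutive in Hq2. nra.
      + assert (0 < F1 (- p2)) by (apply Fpos;  lra). lra.
    - rewrite Rabs_left in HF2y by lra.
      destruct (rise (fun u => - F1 u) (fun u => - F2 u) nu m y (c + (5 / 2 * t1)) ltac:( lra) ltac:(lra) Hnu
        (der_opp F1 F2 HF2) (cont_opp F2 HF2c)
        ltac:(intros u Hu Hu2; cbv beta in *; rewrite Rabs_Ropp; apply Hdm; [apply HarcU; lra|lra])
        ltac:(lra) ltac:(lra))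
        as [p2 [Hq1 [Hq2 [Hq3 _]]]].
      destruct Hq3 as [->|Hq3].
      + specialize (Hq2 (y + t1) ltac:( lra)).
        assert (0 < F1 (y + t1)) by (apply Fpos;  lra). lra.
      + assert (0 < F1 p2) by (apply Fpos;  lra). lra. }
  exists (p + t1 / 2). split.  lra. split. lra.
  pose proof (mono_ge F F1 p (p + t1 / 2) nu ltac:(lra) HF1 Hclaim).
  assert (0 <= m * (p - c) ^ 2) by (apply Rmult_le_pos; [lra|apply pow2_ge_0]).
  assert (a0 ^ 2 < nu ^ 2) by nra.
  assert (2 * m * (F s - F c) < 2 * m * (F (p + t1 / 2) - F c)).
  { assert (m * (nu * (p + t1 / 2 - p)) = nu ^ 2 / 2) by (unfold t1; field; lra).
    nra. }
  nra.
Qed.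


Lemma inArc_negR a b x : inArc (-b) (-a) x -> inArc a b (-x).
Proof. intros [k Hk]. exists (- k)%Z. rewrite opp_IZR. lra. Qed.

Lemma inArc_negL a b x : inArc a b (-x) -> inArc (-b) (-a) x.
Proof. intros [k Hk]. exists (- k)%Z. rewrite opp_IZR. lra. Qed.

Lemma part1 (am bm ap bp jl jr d nu : R) (F F1 F2 : R -> R)
  (Hm : am <= bm) (Hm1 : bm - am <= 1) (Hp : ap <= bp)
  (Hper : forall x : R, F (x + 1) = F x)
  (HF1 : forall x : R, is_derive F x (F1 x))
  (HF2 : forall x : R, is_derive F1 x (F2 x))
  (HF2c : forall x : R, continuous F2 x)
  (Hmon_m : forall x : R, am <= x <= bm -> F1 x <= 0)
  (Hmon_p : forall x : R, ap <= x <= bp -> 0 <= F1 x)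
  (Hd : 0 < d) (Hnu : 0 < nu) (Hnud : nu < d / 2)
  (H1 : forall x : R, inI am bm ap bp x -> d <= Rabs (F1 x) + Rabs (F2 x))
  (H2p_onto : forall E : R, jl <= E <= jr -> exists x : R, ap <= x <= bp /\ F x = E)
  (H3 : forall x : R, bdI am bm ap bp x -> nu <= Rabs (F1 x))
  (Es thm thp : R)
  (HEs : jl <= Es <= jr)
  (Hthm : am <= thm <= bm) (Hthp : ap <= thp <= bp)
  (HEm : F thm = Es) (HEp : F thp = Es)
  (HT : 7 * nu / d <= normT (thp - thm)) :
  nu <= Rabs (F1 thm).
Proof.
  destruct (Rle_dec nu (Rabs (F1 thm))) as [|Hlt]. exact r. exfalso. apply Rnot_le_lt in Hlt.
  pose proof (per_Z F Hper) as HFper.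
  pose proof (per_der F F1 Hper HF1) as HF1per.
  assert (HmA : forall x, inArc am bm x -> F1 x <= 0).
  { intros x [k Hk]. rewrite <- (HF1per x k). apply Hmon_m. exact Hk. }
  assert (HmB : forall x, inArc ap bp x -> 0 <= F1 x).
  { intros x [k Hk]. rewrite <- (HF1per x k). apply Hmon_p. exact Hk. }
  set (U := inI am bm ap bp).
  assert (HU2 : forall x, U x -> Rabs (F1 x) < nu -> exists eps, 0 < eps /\ forall y, Rabs (y - x) < eps -> U y).
  { intros x Ux Hx. destruct (classic (bdI am bm ap bp x)) as [Hb|Hb].
    - specialize (H3 x Hb). lra.
    - apply NNPP. intros Hn. apply Hb. split. exact Ux.
      intros eps Heps. apply NNPP. intros Hn2. apply Hn. exists eps. split. exact Heps.
      intros y Hy. apply NNPP. intros Hy2. apply Hn2. exists y. auto. }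
  assert (Fbp : Es <= F bp).
  { destruct (H2p_onto jr ltac:(lra)) as [x [Hx Hfx]].
    pose proof (mono_ge F F1 x bp 0 ltac:(lra) HF1 ltac:(intros; apply Hmon_p; lra)). lra. }
  assert (Fap : F ap <= Es).
  { destruct (H2p_onto jl ltac:(lra)) as [x [Hx Hfx]].
    pose proof (mono_ge F F1 ap x 0 ltac:(lra) HF1 ltac:(intros; apply Hmon_p; lra)). lra. }
  assert (Fin : forall q k, Rabs (q - thm) < 7 * nu / d -> F q = F thm -> ap <= q + IZR k <= bp -> False).
  { intros q k Hq Hfq Hk.
    assert (q + IZR k = thp).
    { apply (arc_inj F F1 F2 ap bp d); auto.
      intros x Hx. apply H1. right. apply inArc_base. lra.
      rewrite HFper, Hfq. lra. }
    replace (thp - thm) with ((q - thm) + IZR k) in HT by lra.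
    rewrite normT_shift in HT. pose proof (normT_le_abs (q - thm)). lra. }
  assert (HF2t : d - nu < Rabs (F2 thm)).
  { assert (inI am bm ap bp thm) by (left; apply inArc_base; lra). specialize (H1 _ H). lra. }
  destruct (Rle_dec 0 (F2 thm)) as [Hpos|Hneg].
  - rewrite Rabs_pos_eq in HF2t by lra.
    destruct (core am bm ap bp d nu F F1 F2 U Hm Hm1 Hp HFper HF1 HF2 HF2c HmA HmB
      ltac:(intros; left; auto) ltac:(intros; right; auto) ltac:(intros; auto)
      ltac:(intros; apply H1; auto) HU2 Hd Hnu Hnud thm Hthm Hlt ltac:(lra) ltac:(lra))
      as [q [k [Hq1 [Hq2 Hq3]]]].
    exact (Fin q k Hq1 Hq2 Hq3).
  - rewrite Rabs_left in HF2t by lra.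
    destruct (core (-bm) (-am) (-bp) (-ap) d nu (fun x => - F (- x)) (fun x => F1 (- x)) (fun x => - F2 (- x))
      (fun x => U (- x)) ltac:(lra) ltac:(lra) ltac:(lra)
      ltac:(intros x k; cbv beta; replace (- (x + IZR k)) with (- x + IZR (- k)) by (rewrite opp_IZR; ring); rewrite HFper; reflexivity)
      (der_negneg F F1 HF1) (der_neg F1 F2 HF2) (cont_opp _ (cont_neg F2 HF2c))
      ltac:(intros x Hx; apply HmA; apply inArc_negR; exact Hx)
      ltac:(intros x Hx; apply HmB; apply inArc_negR; exact Hx)
      ltac:(intros x Hx; left; apply inArc_negR; exact Hx)
      ltac:(intros x Hx; right; apply inArc_negR; exact Hx)
      ltac:(intros x Hx; destruct Hx as [Hx|Hx]; [left|right]; apply inArc_negL; exact Hx)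
      ltac:(intros x Hx; cbv beta; rewrite Rabs_Ropp; apply H1; exact Hx)
      ltac:(intros x Hx Hx2; destruct (HU2 (- x) Hx Hx2) as [eps [Heps Hb]]; exists eps; split; [exact Heps|];
            intros y Hy; apply Hb; replace (- y - - x) with (- (y - x)) by ring; rewrite Rabs_Ropp; exact Hy)
      Hd Hnu Hnud (- thm) ltac:(lra) ltac:(cbv beta; rewrite Ropp_involutive; exact Hlt)
      ltac:(cbv beta; rewrite Ropp_involutive; lra) ltac:(cbv beta; rewrite !Ropp_involutive; lra))
      as [q [k [Hq1 [Hq2 Hq3]]]].
    cbv beta in Hq2. rewrite Ropp_involutive in Hq2.
    apply (Fin (- q) (- k)%Z).
    + replace (- q - thm) with (- (q - - thm)) by ring. rewrite Rabs_Ropp. exact Hq1.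
    + lra.
    + rewrite opp_IZR. lra.
Qed.


Lemma inI_swap am bm ap bp x : inI (-bp) (-ap) (-bm) (-am) x -> inI am bm ap bp (-x).
Proof. intros [H|H]; [right|left]; apply inArc_negR; exact H. Qed.

Lemma inI_swap' am bm ap bp x : inI am bm ap bp (-x) -> inI (-bp) (-ap) (-bm) (-am) x.
Proof. intros [H|H]; [right|left]; apply inArc_negL; exact H. Qed.

Theorem lemma4p3
  (am bm ap bp jl jr d D nu : R)
  (F F1 F2 : R -> R)
  (Hm : am <= bm) (Hm1 : bm - am <= 1)
  (Hp : ap <= bp) (Hp1 : bp - ap <= 1)
  (Hdisj : forall x : R, ~ (inArcInt am bm x /\ inArcInt ap bp x))
  (HJ : jl <= jr)
  (Hper : forall x : R, F (x + 1) = F x)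
  (HF1 : forall x : R, is_derive F x (F1 x))
  (HF2 : forall x : R, is_derive F1 x (F2 x))
  (HF2c : forall x : R, continuous F2 x)
  (Hmon_m : forall x : R, am <= x <= bm -> F1 x <= 0)
  (Hmon_p : forall x : R, ap <= x <= bp -> 0 <= F1 x)
  (Hd : 0 < d) (HdD : d <= D) (Hnu : 0 < nu) (Hnud : nu < d / 2)
  (H1 : forall x : R, inI am bm ap bp x ->
          d <= Rabs (F1 x) + Rabs (F2 x) <= D)
  (H2m_in : forall x : R, am <= x <= bm -> jl <= F x <= jr)
  (H2m_onto : forall E : R, jl <= E <= jr -> exists x : R, am <= x <= bm /\ F x = E)
  (H2p_in : forall x : R, ap <= x <= bp -> jl <= F x <= jr)
  (H2p_onto : forall E : R, jl <= E <= jr -> exists x : R, ap <= x <= bp /\ F x = E)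
  (H3 : forall x : R, bdI am bm ap bp x -> nu <= Rabs (F1 x))
  (Es thm thp : R)
  (HEs : jl <= Es <= jr)
  (Hthm : am <= thm <= bm) (Hthp : ap <= thp <= bp)
  (HEm : F thm = Es) (HEp : F thp = Es)
  (HT : 7 * nu / d <= normT (thp - thm)) :
  nu <= Rabs (F1 thm) /\ nu <= Rabs (F1 thp).
Proof.
  split.
  - apply (part1 am bm ap bp jl jr d nu F F1 F2 Hm Hm1 Hp Hper HF1 HF2 HF2c Hmon_m Hmon_p Hd Hnu Hnud
      ltac:(intros x Hx; apply (H1 x Hx)) H2p_onto H3 Es thm thp HEs Hthm Hthp HEm HEp HT).
  - pose proof (per_Z F Hper) as HFper.
    pose proof (part1 (-bp) (-ap) (-bm) (-am) jl jr d nu (fun x => F (- x)) (fun x => - F1 (- x)) (fun x => F2 (- x))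
      ltac:(lra) ltac:(lra) ltac:(lra)
      ltac:(intros x; cbv beta; replace (- (x + 1)) with (- x + IZR (- 1)) by (simpl; ring); apply HFper)
      (der_neg F F1 HF1) (der_negneg F1 F2 HF2) (cont_neg F2 HF2c)
      ltac:(intros x Hx; cbv beta; pose proof (Hmon_p (- x) ltac:(lra)); lra)
      ltac:(intros x Hx; cbv beta; pose proof (Hmon_m (- x) ltac:(lra)); lra)
      Hd Hnu Hnud
      ltac:(intros x Hx; cbv beta; rewrite Rabs_Ropp; apply (H1 (- x) (inI_swap _ _ _ _ _ Hx)))
      ltac:(intros E HE; destruct (H2m_onto E HE) as [x0 [Hx0 Hf]]; exists (- x0); split; [lra|];
            cbv beta; rewrite Ropp_involutive; exact Hf)
      ltac:(intros x [Hx Hb]; cbv beta; rewrite Rabs_Ropp; apply H3; split;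
            [apply inI_swap; exact Hx|];
            intros eps Heps; destruct (Hb eps Heps) as [y [Hy Hny]]; exists (- y); split;
            [replace (- y - - x) with (- (y - x)) by ring; rewrite Rabs_Ropp; exact Hy|];
            intros Hc; apply Hny; apply inI_swap'; exact Hc)
      Es (- thp) (- thm) HEs ltac:(lra) ltac:(lra)
      ltac:(cbv beta; rewrite Ropp_involutive; exact HEp)
      ltac:(cbv beta; rewrite Ropp_involutive; exact HEm)
      ltac:(replace (- thm - - thp) with (thp - thm) by ring; exact HT)) as H.
    cbv beta in H. rewrite Ropp_involutive, Rabs_Ropp in H. exact H.
Qed.
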